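(* For every integer $k\ge2$, $$\max_{n\ge1}\frac{\log{\mathfrak t}_k(n)}{n}=\frac12\log\binom{k+1}{2}.$$
   Context: For a positive integer $n$, ${\mathfrak t}_k(n)$ is the number of ordered $k$-tuples $({\mathfrak d}_1,\dots,{\mathfrak d}_k)$ of nonzero Gaussian integers, each taken up to associates (multiplication by $\pm1,\pm i$), such that ${\mathfrak d}_1\cdots{\mathfrak d}_k$ is associated to $n$; equivalently, the number of ordered $k$-tuples of ideals of $\mathbb{Z}[i]$ whose product is $n\mathbb{Z}[i]$. *)

(* Defs.v *)
(* Gaussian integers are pairs (a,b) : Z*Z standing for a+bi. *)
From Stdlib Require Import Reals ZArith List Bool.
Import ListNotations.

Definition gauss := (Z * Z)%type.

Definition gmul (z w : gauss) : gauss :=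
  let '(a, b) := z in let '(c, d) := w in
  (a * c - b * d, a * d + b * c)%Z.

Definition gone : gauss := (1%Z, 0%Z).

Definition gunits : list gauss := [(1,0); (-1,0); (0,1); (0,-1)]%Z.

Definition geqb (z w : gauss) : bool :=
  Z.eqb (fst z) (fst w) && Z.eqb (snd z) (snd w).

Definition gassocb (z w : gauss) : bool :=
  existsb (fun u => geqb (gmul u z) w) gunits.

Definition gprod (l : list gauss) : gauss := fold_right gmul gone l.

(* Canonical representative of an associate class of a nonzero Gaussian
   integer: a > 0 and b >= 0 (every nonzero class has exactly one). *)
Definition gnormalizedb (z : gauss) : bool :=
  (0 <? fst z)%Z && (0 <=? snd z)%Z.

(* Normalized Gaussian integers a+bi with a,b <= n.  Any divisor d of n
   has N(d) <= n^2, hence |a|,|b| <= n, so this box contains all the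
   representatives that can occur in a factorization of n. *)
Definition gcands (n : nat) : list gauss :=
  filter gnormalizedb
    (list_prod (map Z.of_nat (seq 0 (S n))) (map Z.of_nat (seq 0 (S n)))).

Fixpoint tuples {A : Type} (s : list A) (k : nat) : list (list A) :=
  match k with
  | O => [nil]
  | S k' => flat_map (fun x => map (cons x) (tuples s k')) s
  end.

(* t_k(n): number of ordered k-tuples of nonzero Gaussian integers up to
   associates whose product is associated to n. *)
Definition frak_t (k n : nat) : nat :=
  length (filter (fun l => gassocb (gprod l) (Z.of_nat n, 0%Z))
                 (tuples (gcands n) k)).

(* Main.v *)
Require Import Defs.
From Stdlib Require Import Reals.
Open Scope R_scope.
From Stdlib Require Import ZArith List Lia Bool Classical Arith Lra.
Import ListNotations.
Open Scope Z_scope.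


Definition gN (z : gauss) : Z := fst z * fst z + snd z * snd z.
Definition gconj (z : gauss) : gauss := (fst z, - snd z).
Definition assoc (z w : gauss) : Prop := exists u, In u gunits /\ gmul u z = w.
Definition gdv (d z : gauss) : Prop := exists c, z = gmul d c.

Ltac gdes := repeat match goal with
  | z : gauss |- _ => destruct z
  | z : (Z * Z)%type |- _ => destruct z end.
Ltac gs := unfold gmul, gone, gN, gconj in *; cbn [fst snd] in *.

Lemma gmul_comm a b : gmul a b = gmul b a.
Proof. gdes; gs; f_equal; ring. Qed.
Lemma gmul_assoc a b c : gmul a (gmul b c) = gmul (gmul a b) c.
Proof. gdes; gs; f_equal; ring. Qed.
Lemma gmul_1_l a : gmul gone a = a.
Proof. gdes; gs; f_equal; ring. Qed.
Lemma gmul_1_r a : gmul a gone = a.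
Proof. gdes; gs; f_equal; ring. Qed.
Lemma gN_mul a b : gN (gmul a b) = gN a * gN b.
Proof. gdes; gs; ring. Qed.
Lemma gN_nonneg a : 0 <= gN a.
Proof. gdes; gs; nia. Qed.
Lemma gN_zero a : gN a = 0 -> a = (0,0).
Proof. gdes; gs; intros; f_equal; nia. Qed.
Lemma gN_pos a : a <> (0,0) -> 0 < gN a.
Proof. intros H. pose proof (gN_nonneg a). destruct (Z.eq_dec (gN a) 0).
  - apply gN_zero in e. congruence.
  - lia. Qed.
Lemma gmul_conj a : gmul a (gconj a) = (gN a, 0).
Proof. gdes; gs; f_equal; ring. Qed.

Lemma gassocb_iff z w : gassocb z w = true <-> assoc z w.
Proof.
  unfold gassocb, assoc. rewrite existsb_exists. split; intros [u [Hu H]]; exists u; split; auto.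
  - unfold geqb in H. apply andb_true_iff in H. destruct H as [H1 H2].
    apply Z.eqb_eq in H1. apply Z.eqb_eq in H2. destruct (gmul u z), w; simpl in *; congruence.
  - rewrite H. unfold geqb. rewrite !Z.eqb_refl. reflexivity.
Qed.

Lemma unit_N u : In u gunits -> gN u = 1.
Proof. simpl; intros H; repeat destruct H as [H|H]; subst; reflexivity || contradiction. Qed.

Lemma N1_unit u : gN u = 1 -> In u gunits.
Proof. gdes; gs; intros H.
  assert (z = 0 /\ (z0 = 1 \/ z0 = -1) \/ z0 = 0 /\ (z = 1 \/ z = -1)) by nia.
  intuition subst; cbv [In gunits]; tauto. Qed.

Lemma unit_mul u v : In u gunits -> In v gunits -> In (gmul u v) gunits.
Proof. intros Hu Hv. apply N1_unit. rewrite gN_mul, !unit_N; auto. Qed.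

Lemma unit_inv u : In u gunits -> exists v, In v gunits /\ gmul v u = gone.
Proof. intros H; exists (gconj u). split.
  - apply N1_unit. apply unit_N in H. gdes; gs; nia.
  - rewrite gmul_comm, gmul_conj, unit_N; auto. Qed.

Lemma assoc_refl z : assoc z z.
Proof. exists gone; split; [simpl; auto| apply gmul_1_l]. Qed.
Lemma assoc_sym z w : assoc z w -> assoc w z.
Proof. intros [u [Hu H]]. destruct (unit_inv u Hu) as [v [Hv Hvu]].
  exists v; split; auto. subst. rewrite gmul_assoc, Hvu, gmul_1_l; auto. Qed.
Lemma assoc_trans x y z : assoc x y -> assoc y z -> assoc x z.
Proof. intros [u [Hu H]] [v [Hv H']]. exists (gmul v u); split.
  apply unit_mul; auto. subst. rewrite gmul_assoc; auto. Qed.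
Lemma assoc_mul_l x y z : assoc y z -> assoc (gmul x y) (gmul x z).
Proof. intros [u [Hu H]]. exists u; split; auto. subst.
  rewrite !gmul_assoc, (gmul_comm u x); auto. Qed.
Lemma assoc_N x y : assoc x y -> gN x = gN y.
Proof. intros [u [Hu H]]. subst. rewrite gN_mul. rewrite (unit_N u Hu). lia. Qed.

Lemma gcancel z a b : z <> (0,0) -> gmul z a = gmul z b -> a = b.
Proof. intros Hz H. assert (HN := gN_pos z Hz).
  assert (gmul (gconj z) (gmul z a) = gmul (gconj z) (gmul z b)) by congruence.
  rewrite !gmul_assoc, (gmul_comm (gconj z)), gmul_conj in H0.
  gdes. gs. injection H0; intros. f_equal; nia. Qed.

Lemma gmul_nz a b : a <> (0,0) -> b <> (0,0) -> gmul a b <> (0,0).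
Proof. intros Ha Hb H. assert (gN (gmul a b) = 0) by (rewrite H; reflexivity).
  rewrite gN_mul in H0. pose proof (gN_pos a Ha). pose proof (gN_pos b Hb). nia. Qed.

Definition gnormalize (z : gauss) : gauss :=
  if gnormalizedb z then z
  else if gnormalizedb (gmul (0,-1) z) then gmul (0,-1) z
  else if gnormalizedb (gmul (-1,0) z) then gmul (-1,0) z
  else gmul (0,1) z.

Lemma gnormalize_spec z : z <> (0,0) ->
  gnormalizedb (gnormalize z) = true /\ exists u, In u gunits /\ gnormalize z = gmul u z.
Proof. intros Hz. unfold gnormalize.
  destruct (gnormalizedb z) eqn:E1. { split; auto. exists gone; split; [simpl;auto|symmetry; apply gmul_1_l]. }
  destruct (gnormalizedb (gmul (0,-1) z)) eqn:E2. { split; auto. exists (0,-1); split; [simpl;auto|auto]. }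
  destruct (gnormalizedb (gmul (-1,0) z)) eqn:E3. { split; auto. exists (-1,0); split; [simpl;auto|auto]. }
  split; [| exists (0,1); split; [simpl;auto|auto]].
  gdes. unfold gnormalizedb in *; gs.
  assert (z <> 0 \/ z0 <> 0) by (destruct (Z.eq_dec z 0), (Z.eq_dec z0 0); subst; auto; congruence).
  apply andb_false_iff in E1. apply andb_false_iff in E2. apply andb_false_iff in E3.
  rewrite ?Z.ltb_ge, ?Z.leb_gt in *. apply andb_true_iff. rewrite Z.ltb_lt, Z.leb_le. lia.
Qed.

Lemma normalized_nz z : gnormalizedb z = true -> z <> (0,0).
Proof. gdes; unfold gnormalizedb; simpl; intros H; apply andb_true_iff in H.
  rewrite Z.ltb_lt in H. intros E; injection E; lia. Qed.

Lemma normalized_unique z w : gnormalizedb z = true -> gnormalizedb w = true -> assoc z w -> z = w.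
Proof. intros H1 H2 [u [Hu H]]. subst. gdes; unfold gnormalizedb in *; gs.
  apply andb_true_iff in H1; apply andb_true_iff in H2. rewrite Z.ltb_lt, Z.leb_le in *.
  repeat destruct Hu as [Hu|Hu]; try contradiction; injection Hu; intros; subst; gs;
  f_equal; lia. Qed.

Lemma gnormalize_assoc z : z <> (0,0) -> assoc z (gnormalize z).
Proof. intros H. destruct (gnormalize_spec z H) as [_ [u [Hu E]]]. exists u; auto. Qed.
Lemma gnormalize_N z : z <> (0,0) -> gN (gnormalize z) = gN z.
Proof. intros H. symmetry; apply assoc_N, gnormalize_assoc; auto. Qed.


Definition gadd (z w : gauss) : gauss := (fst z + fst w, snd z + snd w).
Definition gopp (z : gauss) : gauss := (- fst z, - snd z).
Definition gzero : gauss := (0,0).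

Lemma gring : ring_theory gzero gone gadd gmul (fun a b => gadd a (gopp b)) gopp (@eq gauss).
Proof. constructor; intros; gdes; unfold gadd, gopp, gzero; gs; f_equal; ring. Qed.
Add Ring GRing : gring.

Lemma gdv_trans a b c : gdv a b -> gdv b c -> gdv a c.
Proof. intros [x Hx] [y Hy]. exists (gmul x y). subst. ring. Qed.
Lemma gdv_mul_r a b c : gdv a b -> gdv a (gmul b c).
Proof. intros [x Hx]. exists (gmul x c). subst. ring. Qed.
Lemma gdv_refl a : gdv a a.
Proof. exists gone. ring. Qed.

Definition gdivb (x w : gauss) : bool :=
  let p := gmul w (gconj x) in
  ((fst p mod gN x) =? 0) && ((snd p mod gN x) =? 0).
Definition gq (w x : gauss) : gauss :=
  let p := gmul w (gconj x) in (fst p / gN x, snd p / gN x).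

Lemma gdivb_true x w : x <> gzero -> gdivb x w = true -> w = gmul x (gq w x).
Proof. intros Hx H. assert (HN := gN_pos x Hx). unfold gdivb, gq in *.
  apply andb_true_iff in H. destruct H as [H1 H2]. apply Z.eqb_eq in H1, H2.
  set (p := gmul w (gconj x)) in *.
  assert (E1 : fst p = gN x * (fst p / gN x)) by (apply Z_div_exact_2; lia).
  assert (E2 : snd p = gN x * (snd p / gN x)) by (apply Z_div_exact_2; lia).
  apply (gcancel (gconj x)).
  { clear -Hx. destruct x as [a b]. unfold gconj, gzero in *; cbn [fst snd]. intro E. injection E; intros.
    apply Hx; f_equal; lia. }
  assert (Hp : gmul (gconj x) w = p) by (unfold p; ring).
  rewrite Hp, gmul_assoc, (gmul_comm (gconj x)), gmul_conj.
  destruct p as [p1 p2]. cbn [fst snd] in *. rewrite E1, E2 at 1. gdes; gs. f_equal; ring.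
Qed.

Lemma gdivb_complete x w : x <> gzero -> gdv x w -> gdivb x w = true.
Proof. intros Hx [c Hc]. subst. assert (HN := gN_pos x Hx). unfold gdivb.
  assert (E : gmul (gmul x c) (gconj x) = gmul (gN x, 0) c)
    by (rewrite <- gmul_conj; ring).
  rewrite E. clear E. set (N := gN x) in *. destruct c as [c1 c2]. unfold gmul. cbn [fst snd].
  apply andb_true_iff; split; apply Z.eqb_eq.
  - replace (N * c1 - 0 * c2) with (c1 * N) by ring. apply Z_mod_mult.
  - replace (N * c2 + 0 * c1) with (c2 * N) by ring. apply Z_mod_mult.
Qed.

Lemma gdivision a b : b <> gzero -> exists q, gN (gadd a (gopp (gmul b q))) < gN b.
Proof. intros Hb. assert (HN := gN_pos b Hb).
  set (N := gN b) in *. set (p := gmul a (gconj b)).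
  set (q1 := (2 * fst p + N) / (2 * N)). set (q2 := (2 * snd p + N) / (2 * N)).
  exists (q1, q2).
  assert (D1 := Z.div_mod (2 * fst p + N) (2 * N) ltac:(lia)).
  assert (M1 := Z.mod_pos_bound (2 * fst p + N) (2 * N) ltac:(lia)).
  assert (D2 := Z.div_mod (2 * snd p + N) (2 * N) ltac:(lia)).
  assert (M2 := Z.mod_pos_bound (2 * snd p + N) (2 * N) ltac:(lia)).
  fold q1 in D1. fold q2 in D2.
  set (r := gadd a (gopp (gmul b (q1, q2)))).
  assert (Hr : gmul r (gconj b) = gadd p (gopp (gmul (N,0) (q1,q2)))).
  { unfold r, p, N. rewrite <- gmul_conj. ring. }
  assert (HrN : gN r * N = gN (gadd p (gopp (gmul (N,0) (q1,q2))))).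
  { rewrite <- Hr, gN_mul. unfold N. f_equal. unfold gN, gconj; cbn [fst snd]. ring. }
  destruct p as [p1 p2]. cbn [fst snd] in *.
  set (m1 := (2 * p1 + N) mod (2 * N)) in *. set (m2 := (2 * p2 + N) mod (2 * N)) in *.
  assert (E1 : 2 * (p1 - N * q1) = m1 - N) by lia.
  assert (E2 : 2 * (p2 - N * q2) = m2 - N) by lia.
  assert (F1 : (m1 - N) * (m1 - N) <= N * N) by nia.
  assert (F2 : (m2 - N) * (m2 - N) <= N * N) by nia.
  assert (HrN' : gN r * N = (p1 - N * q1) * (p1 - N * q1) + (p2 - N * q2) * (p2 - N * q2)).
  { rewrite HrN. unfold gadd, gopp, gmul, gN; cbn [fst snd]. ring. }
  assert (4 * (gN r * N) <= 2 * (N * N)) by nia.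
  nia.
Qed.

Definition Zmeasure (z : gauss) : nat := Z.to_nat (gN z).

Lemma bezout : forall a b, exists g u v,
  g = gadd (gmul u a) (gmul v b) /\ gdv g a /\ gdv g b.
Proof.
  intros a b. remember (Zmeasure b) as m. revert a b Heqm.
  induction m as [m IH] using (well_founded_induction lt_wf).
  intros a b Hm.
  destruct (classic (b = gzero)) as [Hb|Hb].
  - subst. exists a, gone, gzero. repeat split.
    + ring.
    + apply gdv_refl.
    + exists gzero. ring.
  - destruct (gdivision a b Hb) as [q Hq].
    set (r := gadd a (gopp (gmul b q))) in *.
    assert (Hlt : (Zmeasure r < m)%nat).
    { subst m. unfold Zmeasure. pose proof (gN_nonneg r). lia. }
    destruct (IH _ Hlt b r eq_refl) as [g [u [v [Hg [Hgb Hgr]]]]].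
    exists g, v, (gadd u (gopp (gmul v q))). repeat split.
    + rewrite Hg. unfold r. ring.
    + destruct Hgb as [x Hx]; destruct Hgr as [y Hy]. exists (gadd (gmul x q) y).
      assert (a = gadd (gmul b q) r) by (unfold r; ring).
      rewrite H, Hx, Hy. ring.
    + auto.
Qed.

Definition irred (p : gauss) : Prop :=
  1 < gN p /\ forall d, gdv d p -> gN d = 1 \/ gN d = gN p.

Lemma irred_nz p : irred p -> p <> gzero.
Proof. intros [H _] E; subst; unfold gN in H; simpl in H; lia. Qed.

Lemma euclid p a b : irred p -> gdv p (gmul a b) -> gdv p a \/ gdv p b.
Proof.
  intros Hp [m Hm].
  destruct (bezout p a) as [g [u [v [Hg [Hgp Hga]]]]].
  destruct Hp as [Hp1 Hp2]. destruct (Hp2 g Hgp) as [H1|H1].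
  - right. destruct (unit_inv g (N1_unit g H1)) as [g' [_ Hg']].
    exists (gadd (gmul g' (gmul u b)) (gmul g' (gmul v m))).
    transitivity (gmul (gmul g' g) b). { rewrite Hg'. ring. }
    rewrite Hg. transitivity (gadd (gmul p (gmul g' (gmul u b))) (gmul g' (gmul v (gmul a b)))).
    { ring. } rewrite Hm. ring.
  - left. destruct Hgp as [c Hc].
    assert (Hc1 : gN c = 1).
    { assert (gN p = gN g * gN c) by (rewrite Hc; apply gN_mul). nia. }
    destruct (unit_inv c (N1_unit c Hc1)) as [c' [_ Hc']].
    destruct Hga as [e He]. exists (gmul c' e).
    rewrite He. transitivity (gmul (gmul g (gmul c c')) e).
    { rewrite (gmul_comm c c'), Hc'. ring. }
    rewrite Hc. ring.
Qed.

Lemma irred_exists : forall w, 1 < gN w -> exists p, irred p /\ gdv p w.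
Proof.
  intros w. remember (Zmeasure w) as m. revert w Heqm.
  induction m as [m IH] using (well_founded_induction lt_wf).
  intros w Hm Hw.
  destruct (classic (irred w)) as [Hi|Hi].
  - exists w; split; auto. apply gdv_refl.
  - assert (exists d, gdv d w /\ gN d <> 1 /\ gN d <> gN w) as [d [[c Hc] [H1 H2]]].
    { apply NNPP; intro Hn. apply Hi. split; auto. intros d Hd.
      destruct (Z.eq_dec (gN d) 1); auto. destruct (Z.eq_dec (gN d) (gN w)); auto.
      exfalso; apply Hn; exists d; auto. }
    assert (HN : gN w = gN d * gN c) by (rewrite Hc; apply gN_mul).
    pose proof (gN_nonneg d). pose proof (gN_nonneg c).
    assert (gN d <> 0) by (intro E; rewrite E in HN; lia).
    assert (gN c <> 0) by (intro E; rewrite E in HN; lia).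
    assert (gN c <> 1) by (intro E; rewrite E in HN; lia).
    assert (Hd : 1 < gN d) by lia.
    assert (gN d < gN w) by nia.
    assert (Hlt : (Zmeasure d < m)%nat) by (subst m; unfold Zmeasure; apply Z2Nat.inj_lt; lia).
    destruct (IH _ Hlt d eq_refl Hd) as [p [Hp Hpd]].
    exists p; split; auto. apply (gdv_trans _ d); auto. exists c; auto.
Qed.

Lemma even_norm_dv z : Z.even (gN z) = true -> gdv (1,1) z.
Proof. gdes. unfold gN. cbn [fst snd]. intros H.
  rewrite Z.even_add, !Z.even_mul in H.
  destruct (Z.even z) eqn:Ez, (Z.even z0) eqn:Ez0; simpl in H; try discriminate.
  - apply Z.even_spec in Ez, Ez0. destruct Ez as [a Ha], Ez0 as [b Hb]. subst.
    exists (a + b, b - a). gs. f_equal; ring.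
  - assert (Z.odd z = true) by (rewrite <- Z.negb_even, Ez; auto).
    assert (Z.odd z0 = true) by (rewrite <- Z.negb_even, Ez0; auto).
    apply Z.odd_spec in H0, H1. destruct H0 as [a Ha], H1 as [b Hb]. subst.
    exists (a + b + 1, b - a). gs. f_equal; ring.
Qed.

Lemma N_not3 z : gN z <> 3.
Proof. gdes; gs. intros H. assert (z * z <= 3) by nia. assert (z0 * z0 <= 3) by nia.
  assert (z <= 1) by (destruct (Z_le_gt_dec z 1); auto; nia).
  assert (-1 <= z) by (destruct (Z_le_gt_dec (-1) z); auto; nia).
  assert (z0 <= 1) by (destruct (Z_le_gt_dec z0 1); auto; nia).
  assert (-1 <= z0) by (destruct (Z_le_gt_dec (-1) z0); auto; nia).
  assert (z*z <= 1) by nia. assert (z0*z0 <= 1) by nia. lia. Qed.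

Lemma irred_1i : irred (1,1).
Proof. split. { unfold gN; simpl; lia. }
  intros d [c Hc]. assert (gN (1,1) = gN d * gN c) by (rewrite Hc at 1; apply gN_mul).
  assert (E : gN (1,1) = 2) by reflexivity. rewrite E in *.
  pose proof (gN_nonneg d). pose proof (gN_nonneg c).
  set (x := gN d) in *. set (y := gN c) in *.
  assert (y <> 0) by (intro; subst; lia). assert (x <= 2) by nia. assert (x <> 0) by (intro; subst; lia).
  destruct (Z.eq_dec x 1); auto. right. lia. Qed.

Lemma odd_irred_ge5 p w : irred p -> gdv p w -> Z.odd (gN w) = true -> 5 <= gN p.
Proof. intros Hp Hpw Ho. destruct Hp as [H1 _].
  assert (Z.even (gN p) = false).
  { destruct (Z.even (gN p)) eqn:E; auto. exfalso.
    destruct Hpw as [c Hc]. subst. rewrite gN_mul in Ho. rewrite Z.odd_mul in Ho.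
    rewrite <- Z.negb_even, E in Ho. discriminate. }
  pose proof (N_not3 p). assert (gN p <> 2) by (intro E; rewrite E in H; discriminate).
  assert (gN p <> 4) by (intro E; rewrite E in H; discriminate). lia.
Qed.


Definition cnt (S : list gauss) (k : nat) (w : gauss) : nat :=
  length (filter (fun l => gassocb (gprod l) w) (tuples S k)).

Lemma frak_t_cnt k n : frak_t k n = cnt (gcands n) k (Z.of_nat n, 0).
Proof. reflexivity. Qed.

Lemma In_tuples {A} (S : list A) k l :
  In l (tuples S k) <-> length l = k /\ (forall x, In x l -> In x S).
Proof.
  revert l; induction k as [|k IH]; intros l; simpl.
  - split. + intros [H|[]]; subst; simpl; split; auto; intros x [].
    + intros [H _]. destruct l; [auto|discriminate].
  - rewrite in_flat_map. split.
    + intros [x [Hx Hl]]. apply in_map_iff in Hl. destruct Hl as [r [Hr Hr']]. subst.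
      apply IH in Hr'. destruct Hr' as [H1 H2]. simpl; split; auto.
      intros y [Hy|Hy]; subst; auto.
    + intros [H1 H2]. destruct l as [|x r]; [discriminate|]. exists x. split; [apply H2; simpl; auto|].
      apply in_map. apply IH. simpl in H1. split; [lia|]. intros y Hy; apply H2; simpl; auto.
Qed.

Lemma NoDup_tuples {A} (S : list A) k : NoDup S -> NoDup (tuples S k).
Proof.
  intros HS. induction k as [|k IH]; simpl.
  - constructor; [intros []|constructor].
  - induction S as [|x S' IHS]; simpl; [constructor|].
    inversion HS; subst.
Abort.

Lemma NoDup_flat_cons {A} (T : list (list A)) (S : list A) :
  NoDup T -> NoDup S -> NoDup (flat_map (fun x => map (cons x) T) S).
Proof.
  intros HT HS. induction HS as [|x S' Hx HS' IH]; simpl; [constructor|].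
  apply NoDup_app; auto.
  - apply NoDup_map_NoDup_ForallPairs; auto. intros a b _ _ E; injection E; auto.
  - intros l Hl Hl'. apply in_map_iff in Hl. destruct Hl as [r [Hr _]]. subst.
    apply in_flat_map in Hl'. destruct Hl' as [y [Hy Hm]]. apply in_map_iff in Hm.
    destruct Hm as [r' [E _]]. injection E; intros; subst. contradiction.
Qed.

Lemma NoDup_tuples {A} (S : list A) k : NoDup S -> NoDup (tuples S k).
Proof.
  intros HS. induction k as [|k IH]; simpl.
  - constructor; [intros []|constructor].
  - apply NoDup_flat_cons; auto.
Qed.

Lemma NoDup_list_prod {A B} (l : list A) (l' : list B) :
  NoDup l -> NoDup l' -> NoDup (list_prod l l').
Proof.
  intros H H'. induction H as [|x l Hx Hl IH]; simpl; [constructor|].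
  apply NoDup_app; auto.
  - apply NoDup_map_NoDup_ForallPairs; auto. intros a b _ _ E; injection E; auto.
  - intros [a b] Ha Hb. apply in_map_iff in Ha. destruct Ha as [y [E _]]. injection E; intros; subst.
    apply in_prod_iff in Hb. tauto.
Qed.

Lemma NoDup_gcands n : NoDup (gcands n).
Proof.
  unfold gcands. apply NoDup_filter. apply NoDup_list_prod;
  apply NoDup_map_NoDup_ForallPairs; try apply seq_NoDup; intros a b _ _ E; lia.
Qed.

Lemma In_gcands n z : In z (gcands n) <->
  gnormalizedb z = true /\ 0 <= fst z <= Z.of_nat n /\ 0 <= snd z <= Z.of_nat n.
Proof.
  destruct z as [a b]. unfold gcands. rewrite filter_In. rewrite (@in_prod_iff Z Z). rewrite !in_map_iff.
  cbn [fst snd]. split.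
  - intros [[[x [Hx Hx']] [y [Hy Hy']]] Hn]. apply in_seq in Hx', Hy'. subst. split; auto. lia.
  - intros [Hn [Ha Hb]]. split; auto. split.
    + exists (Z.to_nat a). split; [lia|]. apply in_seq; lia.
    + exists (Z.to_nat b). split; [lia|]. apply in_seq; lia.
Qed.

Lemma gcands_nz n z : In z (gcands n) -> z <> gzero.
Proof. intros H. apply In_gcands in H. apply normalized_nz. tauto. Qed.

Lemma filter_flat_map {A B} (f : B -> bool) (g : A -> list B) (l : list A) :
  filter f (flat_map g l) = flat_map (fun x => filter f (g x)) l.
Proof. induction l; simpl; auto. rewrite filter_app, IHl. auto. Qed.

Lemma filter_map_comm {A B} (f : B -> bool) (g : A -> B) (l : list A) :
  filter f (map g l) = map g (filter (fun x => f (g x)) l).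
Proof. induction l; simpl; auto. destruct (f (g a)); simpl; rewrite IHl; auto. Qed.

Lemma assoc_cancel p a b : p <> gzero -> assoc (gmul p a) (gmul p b) -> assoc a b.
Proof. intros Hp [u [Hu H]]. exists u; split; auto. apply (gcancel p); auto.
  rewrite <- H. rewrite !gmul_assoc, (gmul_comm u p). auto. Qed.

Lemma assoc_dv a b : assoc a b -> gdv a b.
Proof. intros [u [Hu H]]. exists u. rewrite <- H. apply gmul_comm. Qed.

Lemma gq_nz x w : x <> gzero -> w <> gzero -> gdivb x w = true -> gq w x <> gzero.
Proof. intros Hx Hw H E. apply gdivb_true in H; auto. rewrite E in H.
  apply Hw. rewrite H. gdes; unfold gzero in *; gs; f_equal; ring. Qed.

Lemma assoc_step x w p : x <> gzero -> w <> gzero ->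
  gassocb (gmul x p) w = if gdivb x w then gassocb p (gnormalize (gq w x)) else false.
Proof.
  intros Hx Hw. destruct (gdivb x w) eqn:E.
  - assert (Hq := gq_nz x w Hx Hw E). apply gdivb_true in E; auto.
    apply eq_true_iff_eq. rewrite !gassocb_iff. split; intros H.
    + apply (assoc_trans _ (gq w x)); [|apply gnormalize_assoc; auto].
      apply (assoc_cancel x); auto. rewrite <- E; auto.
    + apply (assoc_trans _ (gmul x (gq w x))); [|rewrite <- E; apply assoc_refl].
      apply assoc_mul_l. apply (assoc_trans _ (gnormalize (gq w x))); auto.
      apply assoc_sym, gnormalize_assoc; auto.
  - destruct (gassocb (gmul x p) w) eqn:E2; auto. exfalso.
    apply gassocb_iff, assoc_dv in E2. rewrite (gdivb_complete x w) in E; [discriminate|auto|].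
    apply (gdv_trans _ (gmul x p)); auto. exists p; auto.
Qed.

Lemma cnt_S L k w : w <> gzero -> (forall x, In x L -> x <> gzero) ->
  cnt L (S k) w = list_sum (map (fun x => if gdivb x w then cnt L k (gnormalize (gq w x)) else 0%nat) L).
Proof.
  intros Hw HS. unfold cnt at 1. cbn [tuples]. rewrite filter_flat_map, length_flat_map.
  f_equal. apply map_ext_in. intros x Hx. rewrite filter_map_comm, length_map.
  cbn [gprod fold_right]. fold (gprod).
  destruct (gdivb x w) eqn:E.
  - unfold cnt. f_equal. apply filter_ext. intros l. fold (gprod l). rewrite assoc_step; auto. rewrite E; auto.
  - erewrite filter_ext; [|intros l; fold (gprod l); rewrite assoc_step; auto; rewrite E; reflexivity].
    clear. induction (tuples L k); simpl; auto.
Qed.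

Lemma cnt_0 L w : cnt L 0 w = if gassocb gone w then 1%nat else 0%nat.
Proof. unfold cnt; simpl. destruct (gassocb gone w); reflexivity. Qed.


Fixpoint fmap (p : gauss) (l : list gauss) : nat * list gauss :=
  match l with
  | [] => (0%nat, [])
  | d :: r => if gdivb p d then (0%nat, gnormalize (gq d p) :: r)
              else let '(i, r') := fmap p r in (S i, d :: r')
  end.

Lemma fmap_inj p : p <> gzero -> forall l1 l2,
  (forall x, In x l1 -> gnormalizedb x = true) ->
  (forall x, In x l2 -> gnormalizedb x = true) ->
  fmap p l1 = fmap p l2 -> l1 = l2.
Proof.
  intros Hp l1. induction l1 as [|d1 r1 IH]; intros [|d2 r2] H1 H2 E; auto.
  - simpl in E. destruct (gdivb p d2); [discriminate|]. destruct (fmap p r2); discriminate.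
  - simpl in E. destruct (gdivb p d1); [discriminate|]. destruct (fmap p r1); discriminate.
  - simpl in E.
    assert (Hd1 : d1 <> gzero) by (apply normalized_nz, H1; simpl; auto).
    assert (Hd2 : d2 <> gzero) by (apply normalized_nz, H2; simpl; auto).
    destruct (gdivb p d1) eqn:E1, (gdivb p d2) eqn:E2.
    + injection E; intros Hr Hq. subst r2. f_equal.
      assert (Q1 := gq_nz p d1 Hp Hd1 E1). assert (Q2 := gq_nz p d2 Hp Hd2 E2).
      apply gdivb_true in E1; auto. apply gdivb_true in E2; auto.
      apply normalized_unique; [apply H1; simpl; auto|apply H2; simpl; auto|].
      rewrite E1, E2. apply assoc_mul_l.
      apply (assoc_trans _ (gnormalize (gq d1 p))); [apply gnormalize_assoc; auto|].
      rewrite Hq. apply assoc_sym, gnormalize_assoc; auto.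
    + destruct (fmap p r2); discriminate.
    + destruct (fmap p r1); discriminate.
    + destruct (fmap p r1) eqn:F1, (fmap p r2) eqn:F2. injection E; intros; subst.
      f_equal. apply IH; [intros x Hx; apply H1; simpl; auto | intros x Hx; apply H2; simpl; auto | ].
      rewrite F2. reflexivity.
Qed.

Lemma gdv_one_irred p : irred p -> ~ gdv p gone.
Proof. intros [H _] [c Hc]. assert (gN gone = gN p * gN c) by (rewrite Hc at 1; apply gN_mul).
  change (gN gone) with 1 in H0. pose proof (gN_nonneg c).
  destruct (Z.eq_dec (gN c) 0) as [E|E]; [rewrite E in H0; lia|]. nia. Qed.

Lemma gcands_div n p d q : irred p -> In d (gcands n) -> d = gmul p q ->
  In (gnormalize q) (gcands n).
Proof.
  intros Hp Hd Hq. assert (Hnz := gcands_nz n d Hd).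
  assert (Hq0 : q <> gzero) by (intro E; apply Hnz; rewrite Hq, E; destruct p; unfold gzero; gs; f_equal; ring).
  destruct (gnormalize_spec q Hq0) as [Hn _]. assert (HN := gnormalize_N q Hq0).
  apply In_gcands in Hd. apply In_gcands. split; auto.
  destruct Hp as [Hp _]. assert (E : gN d = gN p * gN q) by (rewrite Hq; apply gN_mul).
  pose proof (gN_nonneg q).
  assert (gN d <= 2 * Z.of_nat n * Z.of_nat n) by (destruct d; unfold gN; cbn [fst snd] in *; nia).
  assert (HqN : gN (gnormalize q) <= Z.of_nat n * Z.of_nat n) by nia.
  destruct (gnormalize q) as [a b]. unfold gnormalizedb in Hn. cbn [fst snd] in *.
  apply andb_true_iff in Hn. rewrite Z.ltb_lt, Z.leb_le in Hn. unfold gN in HqN. cbn [fst snd] in HqN.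
  split; split; try lia.
  - destruct (Z_le_gt_dec a (Z.of_nat n)); auto. nia.
  - destruct (Z_le_gt_dec b (Z.of_nat n)); auto. nia.
Qed.

Lemma fmap_props n p : irred p -> forall l,
  (forall x, In x l -> In x (gcands n)) -> gdv p (gprod l) ->
  (fst (fmap p l) < length l)%nat /\ (forall x, In x (snd (fmap p l)) -> In x (gcands n)) /\
  length (snd (fmap p l)) = length l /\ assoc (gmul p (gprod (snd (fmap p l)))) (gprod l).
Proof.
  intros Hp l. induction l as [|d r IH]; intros Hl Hdv.
  - exfalso. apply (gdv_one_irred p Hp Hdv).
  - assert (Hpz := irred_nz p Hp). simpl. destruct (gdivb p d) eqn:E.
    + assert (Hq := gdivb_true p d Hpz E). cbn [fst snd length]. split; [lia|]. split; [|split; auto].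
      * intros x [Hx|Hx]; [subst; apply (gcands_div n p d); auto; apply Hl; simpl; auto|apply Hl; simpl; auto].
      * assert (Hd : d <> gzero) by (apply (gcands_nz n), Hl; simpl; auto).
        assert (Hq0 := gq_nz p d Hpz Hd E).
        destruct (gnormalize_spec (gq d p) Hq0) as [_ [u [Hu Eu]]].
        cbn [gprod fold_right]. fold (gprod r). rewrite Eu.
        apply assoc_sym. exists u; split; auto. rewrite Hq at 1. ring.
    + assert (Hndv : ~ gdv p d) by (intro H; rewrite (gdivb_complete p d Hpz H) in E; discriminate).
      cbn [gprod fold_right] in Hdv. fold (gprod r) in Hdv.
      destruct (euclid p d (gprod r) Hp Hdv) as [H|H]; [contradiction|].
      destruct (IH (fun x Hx => Hl x (or_intror Hx)) H) as [H1 [H2 [H3 H4]]].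
      destruct (fmap p r) as [i r'] eqn:F. cbn [fst snd length] in *. split; [lia|]. split; [|split; [lia|]].
      * intros x [Hx|Hx]; [subst; apply Hl; simpl; auto|auto].
      * cbn [gprod fold_right]. fold (gprod r) (gprod r').
        destruct H4 as [u [Hu Eu]]. exists u; split; auto. rewrite <- Eu. ring.
Qed.

Lemma cnt_inj n k p w w' : irred p -> w = gmul p w' ->
  (cnt (gcands n) k w <= k * cnt (gcands n) k w')%nat.
Proof.
  intros Hp Hw. assert (Hpz := irred_nz p Hp). unfold cnt.
  set (L := filter (fun l => gassocb (gprod l) w) (tuples (gcands n) k)).
  set (L' := filter (fun l => gassocb (gprod l) w') (tuples (gcands n) k)).
  rewrite <- (length_map (fmap p) L). replace (k * length L')%nat with (length (list_prod (seq 0 k) L')) by (rewrite length_prod, length_seq; auto).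
  apply NoDup_incl_length.
  - apply NoDup_map_NoDup_ForallPairs.
    + intros a b Ha Hb E. apply (fmap_inj p Hpz); auto.
      * unfold L in Ha. apply filter_In in Ha. destruct Ha as [Ha _]. apply In_tuples in Ha.
        intros x Hx. apply (In_gcands n x). apply Ha; auto.
      * unfold L in Hb. apply filter_In in Hb. destruct Hb as [Hb _]. apply In_tuples in Hb.
        intros x Hx. apply (In_gcands n x). apply Hb; auto.
    + apply NoDup_filter, NoDup_tuples, NoDup_gcands.
  - intros [i l'] Hm. apply in_map_iff in Hm. destruct Hm as [l [Hf Hl]].
    unfold L in Hl. apply filter_In in Hl. destruct Hl as [Ht Ha]. apply In_tuples in Ht.
    destruct Ht as [Hlen Hin]. apply gassocb_iff in Ha.
    assert (Hdv : gdv p (gprod l)).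
    { apply assoc_sym in Ha. apply assoc_dv in Ha. apply (gdv_trans _ w); auto. rewrite Hw. exists w'; auto. }
    destruct (fmap_props n p Hp l Hin Hdv) as [H1 [H2 [H3 H4]]].
    rewrite Hf in H1, H2, H3, H4. cbn [fst snd] in *.
    apply in_prod_iff. split.
    + apply in_seq. lia.
    + unfold L'. apply filter_In. split.
      * apply In_tuples. split; auto. lia.
      * apply gassocb_iff. apply (assoc_cancel p); auto. rewrite <- Hw.
        apply (assoc_trans _ (gprod l)); auto.
Qed.

Lemma prod_unit_ones l : (forall x, In x l -> gnormalizedb x = true) -> gN (gprod l) = 1 ->
  l = repeat gone (length l).
Proof.
  induction l as [|d r IH]; intros Hn HN; simpl; auto.
  cbn [gprod fold_right] in HN. fold (gprod r) in HN. rewrite gN_mul in HN.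
  pose proof (gN_nonneg d). pose proof (gN_nonneg (gprod r)).
  assert (gN d <> 0) by (intro E; rewrite E in HN; lia).
  assert (gN (gprod r) <> 0) by (intro E; rewrite E in HN; lia).
  assert (gN d = 1) by nia. assert (gN (gprod r) = 1) by nia.
  assert (Hd := Hn d (or_introl eq_refl)).
  rewrite <- IH; [| intros x Hx; apply Hn; simpl; auto | auto]. f_equal.
  destruct d as [a b]. unfold gnormalizedb in Hd. unfold gN in H3. cbn [fst snd] in *.
  apply andb_true_iff in Hd. rewrite Z.ltb_lt, Z.leb_le in Hd. unfold gone. f_equal; nia.
Qed.

Lemma cnt_unit n k w : gN w = 1 -> (cnt (gcands n) k w <= 1)%nat.
Proof.
  intros Hw. unfold cnt.
  set (L := filter (fun l => gassocb (gprod l) w) (tuples (gcands n) k)).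
  assert (HL : forall l, In l L -> l = repeat gone k).
  { intros l Hl. unfold L in Hl. apply filter_In in Hl. destruct Hl as [Ht Ha]. apply In_tuples in Ht.
    destruct Ht as [Hlen Hin]. subst k. apply prod_unit_ones.
    - intros x Hx. apply (In_gcands n x). auto.
    - apply gassocb_iff, assoc_N in Ha. congruence. }
  assert (HND : NoDup L) by (apply NoDup_filter, NoDup_tuples, NoDup_gcands).
  destruct L as [|a [|b L0]]; simpl; auto.
  exfalso. inversion HND; subst. apply H1. left. rewrite (HL a), (HL b); simpl; auto.
Qed.


Definition gpow (z : gauss) (j : nat) : gauss := Nat.iter j (gmul z) gone.

Definition Qpot (w : gauss) (e : nat) : Prop :=
  exists j t v, w = gmul (gpow (1,1) j) v /\ Z.odd (gN v) = true /\
    gN v < 5 ^ Z.of_nat (S t) /\ (j + t <= e)%nat.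

Lemma gpow_0 z : gpow z 0 = gone. Proof. reflexivity. Qed.
Lemma gpow_S z j : gpow z (S j) = gmul z (gpow z j). Proof. reflexivity. Qed.

Lemma pow_ge1 k e : (1 <= k)%nat -> (1 <= k ^ e)%nat.
Proof. intros H. induction e; simpl; nia. Qed.

Lemma cnt_pot n k : (1 <= k)%nat -> forall e w, w <> gzero -> Qpot w e ->
  (cnt (gcands n) k w <= k ^ e)%nat.
Proof.
  intros Hk e. induction e as [|e IH]; intros w Hw [j [t [v [Ew [Ho [Hlt Hje]]]]]].
  - assert (j = 0%nat) by lia. assert (t = 0%nat) by lia. subst j t.
    rewrite gpow_0, gmul_1_l in Ew. subst v.
    assert (gN w = 1).
    { pose proof (gN_pos w Hw). pose proof (N_not3 w). simpl in Hlt.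
      assert (gN w <> 2) by (intro E; rewrite E in Ho; discriminate).
      assert (gN w <> 4) by (intro E; rewrite E in Ho; discriminate). lia. }
    apply cnt_unit; auto.
  - destruct (Z.eq_dec (gN w) 1) as [H1|H1].
    { pose proof (cnt_unit n k w H1). pose proof (pow_ge1 k (S e) Hk). lia. }
    destruct j as [|j].
    + rewrite gpow_0, gmul_1_l in Ew. subst v.
      assert (HwN : 1 < gN w) by (pose proof (gN_pos w Hw); lia).
      destruct (irred_exists w HwN) as [p [Hp [w' Hw']]].
      assert (H5 := odd_irred_ge5 p w Hp (ex_intro _ w' Hw') Ho).
      assert (HN : gN w = gN p * gN w') by (rewrite Hw'; apply gN_mul).
      assert (Hw'0 : w' <> gzero) by (intro E; apply Hw; rewrite Hw', E; destruct p; unfold gzero; gs; f_equal; ring).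
      assert (HN' := gN_pos w' Hw'0).
      assert (Ho' : Z.odd (gN w') = true) by (rewrite HN, Z.odd_mul in Ho; apply andb_true_iff in Ho; tauto).
      destruct t as [|t].
      { exfalso. simpl in Hlt. nia. }
      assert (Hlt' : gN w' < 5 ^ Z.of_nat (S t)).
      { rewrite Nat2Z.inj_succ, Z.pow_succ_r in Hlt by lia. nia. }
      assert (Q' : Qpot w' e) by (exists 0%nat, t, w'; rewrite gpow_0, gmul_1_l; repeat split; auto; lia).
      pose proof (IH w' Hw'0 Q'). pose proof (cnt_inj n k p w w' Hp Hw'). simpl. nia.
    + set (w' := gmul (gpow (1,1) j) v).
      assert (Ew' : w = gmul (1,1) w') by (rewrite Ew; unfold w'; rewrite gpow_S, gmul_assoc; auto).
      assert (Hw'0 : w' <> gzero) by (intro E; apply Hw; rewrite Ew', E; unfold gzero; gs; f_equal; ring).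
      assert (Q' : Qpot w' e) by (exists j, t, v; repeat split; auto; lia).
      pose proof (IH w' Hw'0 Q'). pose proof (cnt_inj n k (1,1) w w' irred_1i Ew'). simpl. nia.
Qed.


Lemma pow2_gauss a : exists u, In u gunits /\ gpow (1,1) (2 * a) = gmul (2 ^ Z.of_nat a, 0) u.
Proof.
  induction a as [|a [u [Hu E]]].
  - exists gone. split; [simpl; auto|]. reflexivity.
  - exists (gmul (0,1) u). split; [apply unit_mul; simpl; auto|].
    replace (2 * S a)%nat with (S (S (2 * a))) by lia. rewrite !gpow_S, E.
    rewrite Nat2Z.inj_succ, Z.pow_succ_r by lia. destruct u. gs. f_equal; ring.
Qed.

Lemma odd_sq_lt h : (2 * Z.of_nat h + 1) * (2 * Z.of_nat h + 1) < 5 ^ Z.of_nat (S h).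
Proof.
  induction h as [|h IH]; [simpl; lia|].
  destruct h as [|h]; [simpl; lia|].
  replace (5 ^ Z.of_nat (S (S (S h)))) with (5 * 5 ^ Z.of_nat (S (S h))) by (rewrite (Nat2Z.inj_succ (S (S h))), Z.pow_succ_r; lia).
  set (P := 5 ^ Z.of_nat (S (S h))) in *.
  rewrite (Nat2Z.inj_succ (S h)) in *. set (y := Z.of_nat (S h)) in *.
  assert (1 <= y) by (unfold y; lia). nia.
Qed.

Lemma decomp2 n : (1 <= n)%nat -> exists a h, n = (2 ^ a * (2 * h + 1))%nat.
Proof.
  induction n as [n IH] using (well_founded_induction lt_wf). intros Hn.
  destruct (Nat.Even_or_Odd n) as [[m Hm]|[m Hm]].
  - destruct (IH m ltac:(lia) ltac:(lia)) as [a [h E]]. exists (S a), h. simpl. lia.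
  - exists 0%nat, m. simpl. lia.
Qed.

Lemma Q_nat a h : Qpot (Z.of_nat (2 ^ a * (2 * h + 1)), 0) (2 * a + h).
Proof.
  destruct (pow2_gauss a) as [u [Hu E]].
  destruct (unit_inv u Hu) as [u' [Hu' Eu]].
  exists (2 * a)%nat, h, (gmul u' (Z.of_nat (2 * h + 1), 0)). repeat split.
  - rewrite E. transitivity (gmul (gmul (2 ^ Z.of_nat a, 0) (gmul u' u)) (Z.of_nat (2 * h + 1), 0)).
    + rewrite Eu. rewrite Nat2Z.inj_mul, Nat2Z.inj_pow. gs. f_equal; simpl; ring.
    + rewrite (gmul_comm u' u). rewrite <- !gmul_assoc. reflexivity.
  - rewrite gN_mul, (unit_N u' Hu'). unfold gN; cbn [fst snd].
    rewrite Z.mul_1_l, Z.add_0_r, Z.odd_mul, Nat2Z.inj_add, Nat2Z.inj_mul.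
    replace (Z.of_nat 2 * Z.of_nat h + Z.of_nat 1) with (1 + 2 * Z.of_nat h) by lia. rewrite Z.odd_add_mul_2. reflexivity.
  - rewrite gN_mul, (unit_N u' Hu'). unfold gN; cbn [fst snd].
    rewrite Nat2Z.inj_add, Nat2Z.inj_mul. pose proof (odd_sq_lt h). lia.
  - lia.
Qed.

Lemma eight_a a : (3 <= a)%nat -> (8 * a <= 3 * 2 ^ a)%nat.
Proof. intros H. induction H; [simpl; lia|]. simpl. lia. Qed.

Lemma ineq_e a h : ~ (a = 1 /\ h = 0)%nat -> ~ (a = 2 /\ h = 0)%nat ->
  (4 * (2 * a + h) <= 3 * (2 ^ a * (2 * h + 1)))%nat.
Proof.
  intros H1 H2. destruct (Nat.le_gt_cases 3 a) as [Ha|Ha].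
  - pose proof (eight_a a Ha). pose proof (pow_ge1 2 a ltac:(lia)). nia.
  - destruct a as [|[|[|a]]]; simpl; lia.
Qed.

Lemma sq_le_nat x y : (x * x <= y * y)%nat -> (x <= y)%nat.
Proof. intros H. destruct (Nat.le_gt_cases x y); auto. nia. Qed.

Lemma bound_general k n c : (2 <= k)%nat -> (2 * c = k * (k + 1))%nat -> (1 <= n)%nat ->
  n <> 2%nat -> n <> 4%nat -> (frak_t k n * frak_t k n <= c ^ n)%nat.
Proof.
  intros Hk Hc Hn H2 H4.
  destruct (decomp2 n Hn) as [a [h E]].
  assert (Hq := Q_nat a h). rewrite <- E in Hq.
  assert (Hb := cnt_pot n k ltac:(lia) (2 * a + h) (Z.of_nat n, 0) ltac:(intro X; unfold gzero in X; injection X; lia) Hq).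
  rewrite <- frak_t_cnt in Hb.
  assert (He : (4 * (2 * a + h) <= 3 * n)%nat).
  { rewrite E. apply ineq_e; intros [-> ->]; simpl in E; lia. }
  set (e := (2 * a + h)%nat) in *. set (t := frak_t k n) in *.
  assert (Hk3 : (k ^ 3 <= c ^ 2)%nat) by (simpl; nia).
  apply sq_le_nat.
  assert (A1 : (t * t * (t * t) <= k ^ e * k ^ e * (k ^ e * k ^ e))%nat) by (apply Nat.mul_le_mono; nia).
  assert (A2 : (k ^ e * k ^ e * (k ^ e * k ^ e) = k ^ (4 * e))%nat).
  { replace (4 * e)%nat with (e + e + (e + e))%nat by lia. rewrite !Nat.pow_add_r. ring. }
  assert (A3 : (k ^ (4 * e) <= k ^ (3 * n))%nat) by (apply Nat.pow_le_mono_r; lia).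
  assert (A4 : (k ^ (3 * n) <= c ^ (2 * n))%nat).
  { rewrite !Nat.pow_mul_r. apply Nat.pow_le_mono_l. auto. }
  assert (A5 : (c ^ (2 * n) = c ^ n * c ^ n)%nat) by (replace (2 * n)%nat with (n + n)%nat by lia; apply Nat.pow_add_r).
  nia.
Qed.


Lemma cnt_S' L M k w : M = L -> w <> gzero -> (forall x, In x L -> x <> gzero) ->
  cnt L (S k) w = list_sum (map (fun x => if gdivb x w then cnt L k (gnormalize (gq w x)) else 0%nat) M).
Proof. intros ->. apply cnt_S. Qed.

Definition S2 : list gauss := Eval vm_compute in gcands 2.
Lemma S2_eq : S2 = gcands 2. Proof. vm_compute. reflexivity. Qed.

Lemma t2_all k : cnt (gcands 2) k (1,0) = 1%nat /\ cnt (gcands 2) k (1,1) = k /\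
  (2 * cnt (gcands 2) k (2,0)%Z = k * (k+1))%nat.
Proof.
  induction k as [|k [IH0 [IH1 IH2]]].
  - rewrite !cnt_0. vm_compute. auto.
  - rewrite !(cnt_S' (gcands 2) S2) by (apply S2_eq || discriminate || apply gcands_nz).
    cbv -[cnt gcands Nat.add Nat.mul]. rewrite IH0, IH1. nia.
Qed.

Definition S4 : list gauss := Eval vm_compute in gcands 4.
Lemma S4_eq : S4 = gcands 4. Proof. vm_compute. reflexivity. Qed.

Lemma t4_all k : cnt (gcands 4) k (1,0) = 1%nat /\ cnt (gcands 4) k (1,1) = k /\
  (2 * cnt (gcands 4) k (2,0)%Z = k * (k+1))%nat /\
  (6 * cnt (gcands 4) k (2,2)%Z = k * (k+1) * (k+2))%nat /\
  (24 * cnt (gcands 4) k (4,0)%Z = k * (k+1) * (k+2) * (k+3))%nat.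
Proof.
  induction k as [|k [IH0 [IH1 [IH2 [IH3 IH4]]]]].
  - rewrite !cnt_0. vm_compute. auto.
  - rewrite !(cnt_S' (gcands 4) S4) by (apply S4_eq || discriminate || apply gcands_nz).
    cbv -[cnt gcands Nat.add Nat.mul]. rewrite IH0, IH1. 
    repeat split; [lia| nia | nia | nia].
Qed.

Close Scope Z_scope.
Open Scope R_scope.

Lemma C_eq k c : (2 <= k)%nat -> (2 * c = k * (k + 1))%nat -> C (k + 1) 2 = INR c.
Proof.
  intros Hk Hc. destruct k as [|[|k']]; [lia|lia|].
  unfold C. replace (S (S k') + 1 - 2)%nat with (S k') by lia.
  replace (S (S k') + 1)%nat with (S (S (S k'))) by lia.
  assert (Hf : fact (S (S (S k'))) = (S (S (S k')) * S (S k') * fact (S k'))%nat) by (cbn [fact]; ring).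
  rewrite Hf. rewrite !mult_INR. change (fact 2) with 2%nat.
  assert (Hc' : INR c = INR (S (S k')) * INR (S (S k') + 1) / 2).
  { apply (f_equal INR) in Hc. rewrite !mult_INR in Hc. simpl (INR 2) in Hc. lra. }
  rewrite Hc'. replace (S (S k') + 1)%nat with (S (S (S k'))) by lia.
  pose proof (INR_fact_neq_0 (S k')). simpl (INR 2). field. auto.
Qed.

Lemma ln_le_ x y : (0 < x)%R -> (x <= y)%R -> (ln x <= ln y)%R.
Proof. intros Hx Hxy. destruct (Rle_lt_or_eq_dec x y Hxy) as [H|H].
  - left. apply ln_increasing; auto.
  - subst; lra. Qed.

Lemma ln_0_ : ln 0 = 0%R.
Proof. unfold ln. destruct (Rlt_dec 0 0) as [H|H]; [exfalso; apply (Rlt_irrefl 0); exact H|reflexivity]. Qed.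

Lemma t2_val k : (2 * frak_t k 2 = k * (k + 1))%nat.
Proof. exact (proj2 (proj2 (t2_all k))). Qed.

Lemma nat_bound k n : (2 <= k)%nat -> (1 <= n)%nat ->
  (frak_t k n * frak_t k n <= frak_t k 2 ^ n)%nat.
Proof.
  intros Hk Hn. assert (Hc := t2_val k).
  destruct (Nat.eq_dec n 2) as [->|H2]; [simpl; lia|].
  destruct (Nat.eq_dec n 4) as [->|H4].
  - assert (H := proj2 (proj2 (proj2 (proj2 (t4_all k))))). rewrite <- frak_t_cnt in H.
    set (c := frak_t k 2) in *. set (t := frak_t k 4) in *.
    assert (t <= c * c)%nat by nia. simpl. nia.
  - apply bound_general; auto.
Qed.

Theorem lemma4 (k : nat) (hk : (2 <= k)%nat) :
  (forall n : nat, (1 <= n)%nat ->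
     ln (INR (frak_t k n)) / INR n <= / 2 * ln (C (k + 1) 2)) /\
  (exists n : nat, (1 <= n)%nat /\
     ln (INR (frak_t k n)) / INR n = / 2 * ln (C (k + 1) 2)).
Proof.
  rewrite (C_eq k (frak_t k 2) hk (t2_val k)).
  set (c := frak_t k 2).
  assert (Hc1 : (1 <= c)%nat) by (pose proof (t2_val k); unfold c; nia).
  assert (Hlc : (0 <= ln (INR c))%R).
  { rewrite <- ln_1. apply ln_le_; [lra|]. apply (le_INR 1); auto. }
  split.
  - intros n Hn. assert (Hb := nat_bound k n hk Hn). fold c in Hb.
    assert (Hnr : (0 < INR n)%R) by (apply lt_0_INR; lia).
    destruct (Nat.eq_dec (frak_t k n) 0) as [E|E].
    + rewrite E. simpl INR. rewrite ln_0_. unfold Rdiv. rewrite Rmult_0_l. lra.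
    + assert (Ht : (0 < INR (frak_t k n))%R) by (apply lt_0_INR; lia).
      assert (H : (2 * ln (INR (frak_t k n)) <= INR n * ln (INR c))%R).
      { replace (2 * ln (INR (frak_t k n)))%R with (INR 2 * ln (INR (frak_t k n)))%R by (simpl; ring).
        assert (0 < INR c)%R by (apply lt_0_INR; lia).
        rewrite <- !ln_pow; auto.
        apply ln_le_; [apply pow_lt; auto|].
        rewrite <- !pow_INR. apply le_INR. simpl. lia. }
      apply (Rmult_le_reg_r (2 * INR n)); [lra|].
      replace (ln (INR (frak_t k n)) / INR n * (2 * INR n))%R with (2 * ln (INR (frak_t k n)))%R by (field; lra).
      replace (/ 2 * ln (INR c) * (2 * INR n))%R with (INR n * ln (INR c))%R by field. auto.
  - exists 2%nat. split; [lia|]. fold c. simpl (INR 2). field.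
Qed.
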